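(* For all integers $q\ge2$ and $n\ge\delta\ge2$ there exists a subset $\mathcal A\subseteq J_q(n)$ with $$|\mathcal A|\ge\frac{\binom{n+q-1}{n}}{(2q+2)^{\delta-2}(2q+1)}$$ such that $d_L(\mathbf u,\mathbf v)\ge 2\delta$ for all distinct $\mathbf u,\mathbf v\in\mathcal A$.
   Context: $J_q(n)=\{(a_1,\dots,a_q)\in\mathbb Z_{\ge0}^q:\ \sum_{i=1}^q a_i=n\}$. The $L^1$-distance is $d_L(\mathbf u,\mathbf v)=\sum_{i=1}^q|u_i-v_i|$. *)

(* Defs.v *)
From mathcomp Require Import all_boot all_order all_algebra.
Set Implicit Arguments. Unset Strict Implicit. Unset Printing Implicit Defensive.

Definition vec (q : nat) := {ffun 'I_q -> nat}.

Definition inJ (q n : nat) (a : vec q) : bool := (\sum_(i < q) a i == n)%N.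

Definition dL (q : nat) (u v : vec q) : nat := (\sum_(i < q) `|u i - v i|)%N.

(* Main.v *)
Require Import Defs.
From mathcomp Require Import all_boot all_order all_algebra all_field.
From mathcomp Require Import zify.
Import GRing.Theory Num.Theory.
Set Implicit Arguments. Unset Strict Implicit. Unset Printing Implicit Defensive.
Local Open Scope ring_scope.

Definition Pe (F : fieldType) q (c : 'I_q -> F) (e : 'I_q -> nat) : {poly F} :=
  \prod_(i < q) ('X - (c i)%:P) ^+ e i.

Lemma Pe_monic (F : fieldType) q (c : 'I_q -> F) e : Pe c e \is monic.
Proof. by apply: monic_prod => i _; apply/monic_exp/monicXsubC. Qed.

Lemma size_Pe (F : fieldType) q (c : 'I_q -> F) e :
  size (Pe c e) = (\sum_(i < q) e i).+1%N.
Proof.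
rewrite /Pe size_prod; last by move=> i _; rewrite expf_neq0 ?polyXsubC_eq0.
under eq_bigr do rewrite size_exp_XsubC.
rewrite (eq_bigr (fun i => e i + 1)%N); last by move=> i _; rewrite addn1.
rewrite big_split /= sum1_card card_ord; lia.
Qed.

Lemma root_Pe (F : fieldType) q (c : 'I_q -> F) e i :
  injective c -> root (Pe c e) (c i) = (0 < e i)%N.
Proof.
move=> ic; rewrite /root /Pe horner_prod.
apply/prodf_eq0/idP => [[j _]|ei].
  by rewrite hornerE expf_eq0 hornerXsubC subr_eq0 => /andP[ej /eqP/ic ->].
by exists i => //; rewrite hornerE expf_eq0 hornerXsubC subrr eqxx andbT.
Qed.

Lemma Pe_split (F : fieldType) q (c : 'I_q -> F) e1 e2 :
  Pe c (fun i => e1 i + e2 i)%N = Pe c e1 * Pe c e2.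
Proof. by rewrite /Pe -big_split; apply: eq_bigr => i _; rewrite exprD. Qed.

Lemma Pe_noroot (F : fieldType) q (c : 'I_q -> F) e x :
  (forall i, c i != x) -> ~~ root (Pe c e) x.
Proof.
move=> cx; rewrite /root /Pe horner_prod; apply/prodf_neq0 => i _.
by rewrite hornerE expf_neq0 // hornerXsubC subr_eq0 eq_sym.
Qed.

Lemma size_diff_monic (F : fieldType) (A B : {poly F}) s :
  A \is monic -> B \is monic -> size A = s.+1 -> size B = s.+1 ->
  (size (A - B)%R <= s)%N.
Proof.
move=> mA mB sA sB; apply/leq_sizeP => j hj; rewrite coefB.
case: (eqVneq j s) => [->|njs].
  have := monicP mA; have := monicP mB; rewrite !lead_coefE sA sB /= => -> ->.
  by rewrite subrr.
by rewrite !nth_default ?subrr // ?sA ?sB; lia.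
Qed.

Lemma key (F : fieldType) q (c : 'I_q -> F) (a : F) h (u v : 'I_q -> nat) :
  injective c -> (forall i, c i != a) ->
  (\sum_i u i = \sum_i v i)%N ->
  Pe c u %% (('X - a%:P) ^+ h) = Pe c v %% (('X - a%:P) ^+ h) ->
  (exists i, u i != v i) ->
  (h < \sum_i (u i - minn (u i) (v i)))%N.
Proof.
move=> ic ca su eqm [i0 ne0].
pose m := fun i => minn (u i) (v i).
pose eA := fun i => (u i - m i)%N. pose eB := fun i => (v i - m i)%N.
have hu : Pe c u = Pe c m * Pe c eA.
  by rewrite -Pe_split /Pe; apply: eq_bigr => i _; rewrite /eA /m; congr (_ ^+ _); lia.
have hv : Pe c v = Pe c m * Pe c eB.
  by rewrite -Pe_split /Pe; apply: eq_bigr => i _; rewrite /eB /m; congr (_ ^+ _); lia.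
have sU : (\sum_i u i = \sum_i m i + \sum_i eA i)%N.
  by rewrite -big_split; apply: eq_bigr => i _; rewrite /eA /m /=; lia.
have sV : (\sum_i v i = \sum_i m i + \sum_i eB i)%N.
  by rewrite -big_split; apply: eq_bigr => i _; rewrite /eB /m /=; lia.
have sAB : (\sum_i eB i = \sum_i eA i)%N by lia.
have dv : ('X - a%:P) ^+ h %| Pe c m * (Pe c eA - Pe c eB).
  by apply/modp_eq0P; rewrite mulrBr -hu -hv modpD modpN eqm subrr.
rewrite Gauss_dvdpr in dv; last first.
  by apply: coprimep_expl; rewrite coprimep_sym coprimep_XsubC Pe_noroot.
case: (eqVneq (Pe c eA - Pe c eB) 0) => [/eqP|nz].
  rewrite subr_eq0 => /eqP AB.
  have := root_Pe eA i0 ic; rewrite AB root_Pe // /eA /eB /m.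
  have [lt|lt] : (u i0 < v i0 \/ v i0 < u i0)%N by lia.
    have -> : (0 < v i0 - minn (u i0) (v i0))%N by lia.
    have -> : (0 < u i0 - minn (u i0) (v i0))%N = false by lia.
    by [].
  have -> : (0 < u i0 - minn (u i0) (v i0))%N by lia.
  have -> : (0 < v i0 - minn (u i0) (v i0))%N = false by lia.
  by [].
have := dvdp_leq nz dv; rewrite size_exp_XsubC => hs.
have := size_diff_monic (Pe_monic c eA) (Pe_monic c eB) (size_Pe c eA).
rewrite size_Pe sAB => /(_ erefl) => hs2.
exact: leq_trans hs hs2.
Qed.

Lemma dL_eq q (u v : vec q) : (\sum_i u i = \sum_i v i)%N ->
  dL u v = (2 * \sum_i (u i - minn (u i) (v i)))%N.
Proof.
move=> su.
have sU : (\sum_i u i = \sum_i minn (u i) (v i) + \sum_i (u i - minn (u i) (v i)))%N.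
  by rewrite -big_split; apply: eq_bigr => i _ /=; lia.
have sV : (\sum_i v i = \sum_i minn (u i) (v i) + \sum_i (v i - minn (u i) (v i)))%N.
  by rewrite -big_split; apply: eq_bigr => i _ /=; lia.
have -> : dL u v = (\sum_i (u i - minn (u i) (v i)) + \sum_i (v i - minn (u i) (v i)))%N.
  by rewrite /dL -big_split; apply: eq_bigr => i _ /=; lia.
lia.
Qed.

Lemma pigeon (X : Type) (K : finType) (col : X -> K) (L : seq X) (k0 : K) :
  exists k, (size L <= #|K| * count (fun x => col x == k) L)%N.
Proof.
have hs : (size L = \sum_(k : K) count (fun x => col x == k) L)%N.
  elim: L => [|x L IH]; first by rewrite big1.
  rewrite /= big_split /= -IH (bigD1 (col x)) //= eqxx big1 // => k nk.
  by rewrite eq_sym (negbTE nk).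
exists [arg max_(k > k0) count (fun x => col x == k) L].
case: arg_maxnP => // k _ kmax.
rewrite hs -sum_nat_const; apply: leq_sum => k' _; exact: kmax.
Qed.

Lemma sum_count_mem (K : finType) (s : seq K) :
  (\sum_(k : K) count_mem k s = size s)%N.
Proof.
elim: s => [|x s IH]; first by rewrite big1.
rewrite /= big_split /= IH (bigD1 x) //= eqxx big1 ?add1n // => k nk.
by rewrite eq_sym (negbTE nk).
Qed.

Lemma count_J n r : exists L : seq (vec r.+1),
  [/\ uniq L, all (@inJ r.+1 n) L & size L = 'C(n + r, n)].
Proof.
pose T := [set t : n.-tuple 'I_r.+1 | sorted leq (map val t)].
pose cnt (t : n.-tuple 'I_r.+1) : vec r.+1 := [ffun i => count_mem i t].
exists [seq cnt t | t <- enum T]; split.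
- rewrite map_inj_in_uniq ?enum_uniq // => t1 t2; rewrite !mem_enum !inE => s1 s2 e.
  have pe : perm_eq t1 t2.
    apply/allP => x _; apply/eqP.
    by have := congr1 (fun f : vec r.+1 => f x) e; rewrite /cnt !ffunE.
  have := sorted_eq leq_trans anti_leq s1 s2 (perm_map val pe).
  by move/(inj_map val_inj)/val_inj.
- apply/allP => f /mapP [t _ ->]; rewrite /inJ; apply/eqP.
  under eq_bigr do rewrite ffunE.
  by rewrite sum_count_mem size_tuple.
- by rewrite size_map -cardE card_sorted_tuples.
Qed.

Lemma leq_expl m n e : (m <= n)%N -> (m ^ e <= n ^ e)%N.
Proof. by move=> le; elim: e => // e IH; rewrite !expnS leq_mul. Qed.

Theorem corollary4p4 (q n delta : nat) :
  (2 <= q)%N -> (2 <= delta)%N -> (delta <= n)%N ->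
  exists A : seq (vec q),
    [/\ uniq A,
        all (@inJ q n) A,
        ('C(n + q - 1, n))%:R
           / (((2 * q + 2) ^ (delta - 2))%N%:R * (2 * q + 1)%N%:R)
           <= (size A)%:R :> rat
      & forall u v, u \in A -> v \in A -> u != v -> (2 * delta <= dL u v)%N].
Proof.
case: q => [|[|r]] // _; case: delta => [|[|d]] // _ hn.
pose k := (trunc_log 2 r.+2).+1.
have [F _ cardF] := @pPrimePowerField 2 k erefl erefl.
have hk1 : (r.+3 <= 2 ^ k)%N by apply: trunc_log_ltn.
have hk2 : (2 ^ k <= 2 * r.+2)%N.
  by rewrite /k expnS leq_mul2l /=; apply: trunc_logP.
pose s := enum F.
have ss : size s = (2 ^ k)%N by rewrite /s -cardE cardF.
pose a := nth 0 s 0.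
pose c := fun i : 'I_r.+2 => nth 0 s i.+1.
have ic : injective c.
  move=> i j /eqP; rewrite /c nth_uniq ?enum_uniq ?ss //; last 2 first.
  - by apply: leq_trans hk1; rewrite ltnS.
  - by apply: leq_trans hk1; rewrite ltnS.
  by move=> /eqP [] /val_inj.
have ca : forall i, c i != a.
  move=> i; rewrite /c /a nth_uniq ?enum_uniq ?ss //.
  by apply: leq_trans hk1; rewrite ltnS.
  by apply: leq_trans hk1.
have [L [uL aL sL]] := count_J n r.+1.
pose M : {poly F} := ('X - a%:P) ^+ d.+1.
pose col := fun u : vec r.+2 => [ffun j : 'I_d.+1 => (Pe c u %% M)`_j].
have [kap hkap] := pigeon col L [ffun => 0].
exists (filter (fun x => col x == kap) L); split.
- exact: filter_uniq.
- by apply/allP => x; rewrite mem_filter => /andP[_ xL]; apply: (allP aL).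
- rewrite size_filter.
  have e1 : (n + r.+2 - 1 = n + r.+1)%N by lia.
  have e2 : (d.+2 - 2 = d)%N by lia.
  rewrite e1 e2 -natrM ler_pdivrMr ?ltr0n ?muln_gt0 ?expn_gt0 //.
  rewrite -natrM ler_nat -sL.
  apply: leq_trans hkap _.
  rewrite mulnC leq_mul2l card_ffun card_ord cardF.
  apply/orP; right; rewrite expnS mulnC leq_mul //.
    by apply: leq_expl; lia.
  by lia.
- move=> u v; rewrite !mem_filter => /andP[/eqP cu uL'] /andP[/eqP cv vL'] nuv.
  have su : (\sum_i u i = \sum_i v i)%N.
    by have := allP aL u uL'; have := allP aL v vL'; rewrite /inJ => /eqP -> /eqP ->.
  have Mn0 : M != 0 by rewrite expf_neq0 // polyXsubC_eq0.
  have em : Pe c u %% M = Pe c v %% M.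
    apply/polyP => j; case: (ltnP j d.+1) => hj.
      have := congr1 (fun f : {ffun 'I_d.+1 -> F} => f (Ordinal hj)) (etrans cu (esym cv)).
      by rewrite /col !ffunE.
    have sM : size M = d.+2 by rewrite size_exp_XsubC.
    rewrite !nth_default //.
      by apply: leq_trans hj; rewrite -ltnS -sM ltn_modp.
    by apply: leq_trans hj; rewrite -ltnS -sM ltn_modp.
  have ex : exists i, u i != v i.
    case/boolP: [exists i, u i != v i] => [/existsP //|/existsPn H].
    by case/eqP: nuv; apply/ffunP => i; apply/eqP; have := H i; rewrite negbK.
  have := key ic ca su em ex.
  by rewrite dL_eq // leq_mul2l.
Qed.
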